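(* If $B$ is an algebra that is integral over a Jacobson ring $A$, then $B$ is Jacobson.
   Context: All rings are commutative with identity. The setting is constructive mathematics: no law of excluded middle and no Zorn's lemma. For a ring $A$ and a subset $U\subseteq A$, $\langle U\rangle_A$ denotes the ideal generated by $U$. Define $\mathrm{Nil}_A U:=\{a\in A:\exists n\ge 0,\ a^n\in\langle U\rangle_A\}$ and $\mathrm{Jac}_A U:=\{a\in A:\forall b\in A,\ 1\in\langle U\cup\{1-ab\}\rangle_A\}$. A ring $A$ is called Jacobson if every ideal $I$ of $A$ satisfies $\mathrm{Jac}_A I\subseteq \mathrm{Nil}_A I$. *)

(* Defs.v *)
From mathcomp Require Import all_boot all_algebra.
Set Implicit Arguments. Unset Strict Implicit. Unset Printing Implicit Defensive.
Import GRing.Theory.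
Local Open Scope ring_scope.

(* Rings: commutative with identity; the zero ring is allowed (comPzRingType).
   Subsets of a ring are predicates R -> Prop. *)

Definition ideal_gen (R : comPzRingType) (U : R -> Prop) : R -> Prop :=
  fun x => exists (n : nat) (r u : 'I_n -> R),
      (forall i, U (u i)) /\ x = \sum_(i < n) r i * u i.

Definition is_ideal (R : comPzRingType) (I : R -> Prop) : Prop :=
  [/\ I 0, (forall x y, I x -> I y -> I (x + y)) & (forall r x, I x -> I (r * x))].

Definition Nil (R : comPzRingType) (U : R -> Prop) : R -> Prop :=
  fun a => exists n : nat, ideal_gen U (a ^+ n).

Definition Jac (R : comPzRingType) (U : R -> Prop) : R -> Prop :=
  fun a => forall b : R, ideal_gen (fun x => U x \/ x = 1 - a * b) 1.

Definition jacobson_ring (R : comPzRingType) : Prop :=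
  forall I : R -> Prop, is_ideal I -> forall a, Jac I a -> Nil I a.

Definition integral_over (A B : comPzRingType) (f : {rmorphism A -> B}) : Prop :=
  forall b : B, exists (n : nat) (c : 'I_n -> A),
      b ^+ n + \sum_(i < n) f (c i) * b ^+ i = 0.

(* Main.v *)
Require Import Defs.
From mathcomp Require Import all_boot all_algebra.
From mathcomp Require Import ring.
Set Implicit Arguments. Unset Strict Implicit. Unset Printing Implicit Defensive.
Import GRing.Theory.
Local Open Scope ring_scope.

Section Aux.
Variable R : comPzRingType.
Variable J : R -> Prop.
Hypothesis HJ : is_ideal J.

Lemma id0 : J 0. Proof. by case: HJ. Qed.
Lemma idD x y : J x -> J y -> J (x + y). Proof. by case: HJ => _ H _; apply: H. Qed.
Lemma idM r x : J x -> J (r * x). Proof. by case: HJ => _ _ H; apply: H. Qed.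
Lemma idMr r x : J x -> J (x * r). Proof. by move=> Hx; rewrite mulrC; apply: idM. Qed.
Lemma idN x : J x -> J (- x). Proof. by move=> Hx; rewrite -mulN1r; apply: idM. Qed.
Lemma id_sum n (F : 'I_n -> R) : (forall i, J (F i)) -> J (\sum_(i < n) F i).
Proof. move=> H; apply: big_ind => //; [exact: id0 | exact: idD]. Qed.

Definition cong x y := J (x - y).
Lemma cong_refl x : cong x x. Proof. by rewrite /cong subrr; apply: id0. Qed.
Lemma cong_trans x y z : cong x y -> cong y z -> cong x z.
Proof. move=> H1 H2; move: (idD H1 H2); by rewrite /cong addrA subrK. Qed.
Lemma cong_add x1 x2 y1 y2 : cong x1 y1 -> cong x2 y2 -> cong (x1 + x2) (y1 + y2).
Proof. move=> H1 H2; rewrite /cong opprD addrACA; exact: idD. Qed.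
Lemma cong_mul x1 x2 y1 y2 : cong x1 y1 -> cong x2 y2 -> cong (x1 * x2) (y1 * y2).
Proof.
move=> H1 H2; rewrite /cong.
have -> : x1 * x2 - y1 * y2 = x1 * (x2 - y2) + (x1 - y1) * y2 by ring.
by apply: idD; [apply: idM | apply: idMr].
Qed.
Lemma cong_pow x y k : cong x y -> cong (x ^+ k) (y ^+ k).
Proof.
move=> H; elim: k => [|k IH]; first by rewrite !expr0; exact: cong_refl.
by rewrite !exprS; apply: cong_mul.
Qed.
Lemma cong_sum n (F G : 'I_n -> R) : (forall i, cong (F i) (G i)) ->
  cong (\sum_(i < n) F i) (\sum_(i < n) G i).
Proof. by move=> H; rewrite /cong -sumrB; apply: id_sum. Qed.
Lemma cong_ideal x y : cong x y -> J y -> J x.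
Proof. move=> H Hy; have -> : x = (x - y) + y by rewrite subrK. exact: idD. Qed.

Lemma gen_ideal x : ideal_gen J x -> J x.
Proof. case=> n [r [u [Hu ->]]]; apply: id_sum => i; apply: idM; exact: Hu. Qed.

Lemma gen_split e x : ideal_gen (fun y => J y \/ y = e) x -> exists j z, J j /\ x = j + e * z.
Proof.
case=> n [r [u [Hu ->]]]; elim: n r u Hu => [|n IH] r u Hu.
  by exists 0, 0; rewrite big_ord0 mulr0 addr0; split => //; apply: id0.
rewrite big_ord_recr /=.
have [j [z [Hj ->]]] := IH (fun i => r (widen_ord (leqnSn n) i))
   (fun i => u (widen_ord (leqnSn n) i)) (fun i => Hu _).
case: (Hu ord_max) => [Hm | ->].
  exists (j + r ord_max * u ord_max), z; split; first by apply: idD => //; apply: idM.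
  by rewrite addrAC.
exists j, (z + r ord_max); split => //; by rewrite mulrDr addrA [e * r _]mulrC.
Qed.
End Aux.

Lemma gen_mono (R : comPzRingType) (U V : R -> Prop) x :
  (forall y, U y -> V y) -> ideal_gen U x -> ideal_gen V x.
Proof. move=> H [n [r [u [Hu E]]]]; exists n, r, u; split => // i; exact: H. Qed.

Lemma gen_in (R : comPzRingType) (U : R -> Prop) x : U x -> ideal_gen U x.
Proof.
move=> Hx; exists 1%N, (fun _ => 1), (fun _ => x); split => //.
by rewrite big_ord1 mul1r.
Qed.

Lemma gen_of (R : comPzRingType) (P : R -> Prop) e x z :
  P x -> ideal_gen (fun y => P y \/ y = e) (x + e * z).
Proof.
move=> Hx; exists 2%N, (fun i : 'I_2 => if val i == 0%N then 1 else z),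
  (fun i : 'I_2 => if val i == 0%N then x else e); split.
  by case=> [[|k] Hk] /=; [left | right].
by rewrite !big_ord_recl big_ord0 /= mul1r addr0 mulrC.
Qed.

Lemma unit_lift (A B : comPzRingType) (f : {rmorphism A -> B}) (J : B -> Prop) :
  is_ideal J -> integral_over f -> forall u z, cong J (f u * z) 1 ->
  ideal_gen (fun x => J (f x) \/ x = u) 1.
Proof.
move=> HJ Hint u z Huz.
have [m [d Hd]] := Hint z.
set t := \sum_(i < m) d i * u ^+ (m - i).
set s := \sum_(i < m) d i * u ^+ (m - i.+1).
have ts : t = u * s.
  rewrite /t /s mulr_sumr; apply: eq_bigr => i _.
  by rewrite mulrCA -exprS subnSK.
have Ht : J (f (1 + t)).
  have Em i : (i < m)%N -> f u ^+ m = f u ^+ (m - i) * f u ^+ i.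
    by move=> Hi; rewrite -exprD subnK // ltnW.
  have E : f u ^+ m * (z ^+ m + \sum_(i < m) f (d i) * z ^+ i) =
     (f u * z) ^+ m + \sum_(i < m) f (d i) * f u ^+ (m - i) * (f u * z) ^+ i.
    rewrite mulrDr exprMn; congr (_ + _); rewrite mulr_sumr; apply: eq_bigr => i _.
    rewrite (Em i (ltn_ord i)) exprMn; ring.
  have C : cong J (f u ^+ m * (z ^+ m + \sum_(i < m) f (d i) * z ^+ i)) (f (1 + t)).
    rewrite E /t rmorphD rmorph1 rmorph_sum /=.
    apply: cong_add => //.
      by rewrite -(expr1n _ m); apply: cong_pow.
    apply: cong_sum => // i; rewrite rmorphM rmorphXn /=.
    rewrite -[X in cong _ _ X]mulr1; apply: cong_mul => //; first exact: cong_refl.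
    by rewrite -(expr1n _ i); apply: cong_pow.
  by move: C; rewrite Hd mulr0 /cong sub0r => /(idN HJ); rewrite opprK.
have -> : (1 : A) = (1 + t) + u * (- s) by rewrite mulrN -ts addrK.
exact: gen_of.
Qed.

Lemma key (A B : comPzRingType) (f : {rmorphism A -> B}) (HA : jacobson_ring A)
  (Hint : integral_over f) (b : B) n :
  forall (J : B -> Prop) (c : 'I_n -> A), is_ideal J -> Jac J b ->
  J (b ^+ n + \sum_(i < n) f (c i) * b ^+ i) -> exists m, J (b ^+ m).
Proof.
elim: n => [|n IH] J c HJ Hb Hc.
  by exists 0%N; move: Hc; rewrite big_ord0 addr0.
set g := b ^+ n + \sum_(i < n) f (c (lift ord0 i)) * b ^+ i.
have Eg : b ^+ n.+1 + \sum_(i < n.+1) f (c i) * b ^+ i = f (c ord0) + b * g.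
  rewrite big_ord_recl expr0 mulr1 /g mulrDr mulr_sumr addrCA -exprS; congr (_ + (_ + _)).
  by apply: eq_bigr => i _; rewrite /= exprS mulrCA.
rewrite Eg in Hc.
pose I := fun a => J (f a).
have HI : is_ideal I.
  split; rewrite /I.
  - by rewrite rmorph0; apply: id0.
  - by move=> x y Hx Hy; rewrite rmorphD; apply: idD.
  - by move=> r x Hx; rewrite rmorphM; apply: idM.
have HjacA : Jac I (c ord0).
  move=> a; have [j [z [Hj E]]] := gen_split HJ (Hb (-(g * f a))).
  apply: (unit_lift HJ Hint (z := z)).
  apply: (cong_trans HJ (y := (1 - b * - (g * f a)) * z)).
    apply: (cong_mul HJ); last exact: (cong_refl HJ).
    rewrite /cong. rewrite rmorphB rmorph1 rmorphM.
    have -> : 1 - f (c ord0) * f a - (1 - b * - (g * f a)) =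
      - ((f (c ord0) + b * g) * f a) by ring.
    by apply: idN => //; apply: idMr.
  have HX : (1 - b * - (g * f a)) * z = 1 - j.
    by rewrite [in RHS]E addrAC subrr add0r.
  by rewrite HX /cong addrAC subrr add0r; apply: idN.
have [k Hk] := HA I HI (c ord0) HjacA.
have Hk' : J (f (c ord0) ^+ k) by rewrite -rmorphXn; apply: (gen_ideal HI).
have Hbg : J ((b * g) ^+ k).
  apply: (cong_ideal HJ (y := (- f (c ord0)) ^+ k)).
    apply: (cong_pow HJ); rewrite /cong opprK addrC; exact: Hc.
  by rewrite exprNn; apply: idM.
pose J' := fun x => exists j y, J j /\ x = j + g * y.
have HJ' : is_ideal J'.
  split.
  - by exists 0, 0; split; [apply: id0 | rewrite mulr0 addr0].
  - move=> x y [j1 [y1 [H1 ->]]] [j2 [y2 [H2 ->]]].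
    exists (j1 + j2), (y1 + y2); split; first exact: idD.
    by rewrite mulrDr addrACA.
  - move=> r x [j1 [y1 [H1 ->]]]; exists (r * j1), (r * y1); split; first exact: idM.
    by rewrite mulrDr mulrCA.
have Hb' : Jac J' b.
  move=> y; apply: gen_mono (Hb y) => x [Hx | ->]; last by right.
  by left; exists x, 0; rewrite mulr0 addr0.
have Hg : J' g by exists 0, 1; split; [apply: id0 | rewrite mulr1 add0r].
have [m [j [y [Hj Em]]]] := IH J' (fun i => c (lift ord0 i)) HJ' Hb' Hg.
exists (m.+1 * k)%N; rewrite exprM.
apply: (cong_ideal HJ (y := (b * g * y) ^+ k)).
  apply: (cong_pow HJ); rewrite /cong exprS Em mulrDr mulrA addrK; exact: idM.
by rewrite exprMn; apply: idMr.
Qed.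

Theorem mainTheorem10 (A B : comPzRingType) (f : {rmorphism A -> B}) :
  jacobson_ring A -> integral_over f -> jacobson_ring B.
Proof.
move=> HA Hint I HI a Ha.
have [n [c Hc]] := Hint a.
have H0 : I (a ^+ n + \sum_(i < n) f (c i) * a ^+ i) by rewrite Hc; exact: id0.
have [m Hm] := key HA Hint HI Ha H0.
by exists m; apply: gen_in.
Qed.
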